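(* Let $q\ge 3$ and $\beta=0$. Let $\Omega=(G,\Lambda,\sigma)$ with $G=(V,E)$ be a feasible instance of the Potts model, let $v\in V\setminus\Lambda$, $B=B_\Omega(v)$, and let $\pi\in[q]^{B}$ be locally feasible. Then $\pi$ is feasible, i.e., there exists $\rho\in[q]^V$ with $w_\Omega(\rho)>0$ agreeing with $\pi$ on $B$.
   Context: Potts model: fix an integer $q\ge2$ and a real $\beta\ge0$; $[q]=\{1,\dots,q\}$, $0^0=1$. For a finite graph $G=(V,E)$ an instance is $\Omega=(G,\Lambda,\sigma)$, $\Lambda\subseteq V$, $\sigma\in[q]^\Lambda$; $w_\Omega(\pi)=\beta^{|\{uv\in E:\pi(u)=\pi(v)\}|}$ if $\pi\in[q]^V$ agrees with $\sigma$ on $\Lambda$, else $0$; $\Omega$ is feasible if some $\pi$ has $w_\Omega(\pi)>0$. For $S\subseteq V$ and $\rho\in[q]^S$, $w_{G[S]}(\rho)=\beta^{|\{uv\in E: u,v\in S,\rho(u)=\rho(v)\}|}$. For $S\subseteq V\setminus\Lambda$, $\pi\in[q]^S$ is locally feasible if $w_{G[\Lambda\cup S]}(\sigma\cup\pi)>0$, where $\sigma\cup\pi$ is the configuration on $\Lambda\cup S$ agreeing with $\sigma$ and $\pi$. A vertex is low-degree if $\deg_G(v)<\frac{q-1}{1-\beta}-2$ (for $\beta=0$: $\deg_G(v)<q-3$). $\partial B=\{u\in V\setminus B:\exists w\in B,uw\in E\}$. $B\subseteq V\setminus\Lambda$ is a permissive block in $\Omega$ if every $u\in\partial B\setminus\Lambda$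 is low-degree; $B_\Omega(S)$ is the minimal permissive block containing $S$. *)

(* Defs.v *)
From HB Require Import structures.
From mathcomp Require Import all_boot all_order all_algebra.
Set Implicit Arguments. Unset Strict Implicit. Unset Printing Implicit Defensive.
Import Order.TTheory GRing.Theory Num.Theory.
Local Open Scope ring_scope.

(* Graph G = (V, e): V a finite type, e a symmetric irreflexive relation
   (hypotheses in the theorem).
   Configurations are finite functions V -> 'I_q; a configuration on a
   subset S is a full function of which only the values on S matter. *)

Section Potts.
Variables (R : realFieldType) (V : finType) (q : nat) (e : rel V).

Definition mono_count (S : {set V}) (rho : V -> 'I_q) : nat :=
  #|[set [set u; w] | u in S, w in S & e u w && (rho u == rho w)]|.

(* w_{G[S]}(rho) = beta ^ (#monochromatic edges inside S); 0^0 = 1 *)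
Definition w_induced (beta : R) (S : {set V}) (rho : V -> 'I_q) : R :=
  beta ^+ mono_count S rho.

Definition w_Omega (beta : R) (Lambda : {set V}) (sigma : V -> 'I_q)
    (pi : V -> 'I_q) : R :=
  if [forall x in Lambda, pi x == sigma x]
  then beta ^+ mono_count [set: V] pi else 0.

Definition feasible (beta : R) (Lambda : {set V}) (sigma : V -> 'I_q) : Prop :=
  exists pi : {ffun V -> 'I_q}, 0 < w_Omega beta Lambda sigma pi.

(* sigma ∪ pi on Lambda ∪ S *)
Definition glue (Lambda : {set V}) (sigma pi : V -> 'I_q) : V -> 'I_q :=
  fun x => if x \in Lambda then sigma x else pi x.

Definition locally_feasible (beta : R) (Lambda : {set V}) (sigma : V -> 'I_q)
    (S : {set V}) (pi : V -> 'I_q) : Prop :=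
  0 < w_induced beta (Lambda :|: S) (glue Lambda sigma pi).

Definition deg (v : V) : nat := #|[set u | e v u]|.

Definition low_degree (beta : R) (v : V) : bool :=
  (deg v)%:R < (q%:R - 1) / (1 - beta) - 2.

Definition boundary (B : {set V}) : {set V} :=
  [set u in ~: B | [exists w in B, e u w]].

Definition permissive (beta : R) (Lambda : {set V}) (B : {set V}) : bool :=
  (B \subset ~: Lambda) &&
  [forall u in boundary B :\: Lambda, low_degree beta u].

(* minimal permissive block containing S (permissive blocks are closed under
   intersection, so this is the intersection of all of them) *)
Definition B_Omega (beta : R) (Lambda : {set V}) (S : {set V}) : {set V} :=
  \bigcap_(B | permissive beta Lambda B && (S \subset B)) B.

End Potts.

(* Main.v *)
Require Import Defs.
From HB Require Import structures.
From mathcomp Require Import all_boot all_order all_algebra.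
From mathcomp Require Import zify lra.
Import Order.TTheory GRing.Theory Num.Theory.
Local Open Scope ring_scope.

Lemma mono0P (V : finType) (q : nat) (e : rel V) (S : {set V}) (p : V -> 'I_q) :
  mono_count e S p = 0%N <->
  (forall u w, u \in S -> w \in S -> e u w -> p u != p w).
Proof.
rewrite /mono_count; split.
- move=> /eqP; rewrite cards_eq0 => /eqP H u w uS wS euw; apply/negP => Hp.
  have : [set u; w] \in set0 by rewrite -H; apply/imset2P; apply: (Imset2spec (x1:=u) (x2:=w)) => //; rewrite inE wS euw Hp.
  by rewrite inE.
- move=> H; apply/eqP; rewrite cards_eq0; apply/eqP/setP => z; rewrite inE.
  apply/negP => /imset2P [u w uS]; rewrite inE => /andP [wS /andP [euw Hp]] _.
  by move: (H u w uS wS euw); rewrite Hp.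
Qed.

Lemma pos0 (R : realFieldType) n : (0 : R) < 0 ^+ n -> n = 0%N.
Proof. by rewrite expr0n; case: n => //=; rewrite ltxx. Qed.

Lemma greedy (V : finType) (q : nat) (e : rel V) (e_sym : symmetric e) (e_irr : irreflexive e)
  n (S : {set V}) (c : {ffun V -> 'I_q}) : #|S| = n ->
  (forall x, x \in S -> (deg e x < q)%N) ->
  (forall u w, e u w -> u \notin S -> w \notin S -> c u != c w) ->
  exists c' : {ffun V -> 'I_q}, (forall x, x \notin S -> c' x = c x) /\
     (forall u w, e u w -> c' u != c' w).
Proof.
elim: n S c => [|n IH] S c hS hdeg hc.
  exists c; split=> // u w euw; apply: hc => //; move/eqP: hS; rewrite cards_eq0 => /eqP ->; by rewrite inE.
have [x xS] : exists x, x \in S by apply/set0Pn; rewrite -card_gt0 hS.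
set img := c @: [set y | e x y].
have : (0 < #|~: img|)%N.
  have := cardsC img; rewrite card_ord.
  have := leq_imset_card c [set y | e x y]; have := hdeg x xS; rewrite /deg /img => ? ? ?; lia.
rewrite card_gt0 => /set0Pn [k]; rewrite inE => kimg.
pose c1 := [ffun y => if y == x then k else c y].
have hS' : #|S :\ x| = n by rewrite (cardsD1 x S) xS in hS; case: hS.
have hdeg' : forall y, y \in S :\ x -> (deg e y < q)%N by move=> y; rewrite inE => /andP [_ /hdeg].
have [|c' [h1 h2]] := IH (S :\ x) c1 hS' hdeg'; last first.
- exists c'; split=> // y yS; rewrite h1; last by rewrite !inE (negbTE yS) andbF.
  rewrite /c1 ffunE; case: eqP => // yx; by move: yS; rewrite yx xS.
- move=> u w euw; rewrite !inE !negb_and !negbK /c1 !ffunE.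
  have ex: forall y, e x y -> k != c y.
    by move=> y exy; apply/eqP => ky; move: kimg; rewrite ky; case/negP; apply/imsetP; exists y; rewrite ?inE.
  case: (eqVneq u x) => [ux | ux]; case: (eqVneq w x) => [wx | wx] /= hu hw.
  + by subst u w; rewrite e_irr in euw.
  + by subst u; apply: ex.
  + by rewrite eq_sym; apply: ex; rewrite -wx e_sym.
  + by apply: hc.
Qed.

Theorem mainTheorem5 (R : realFieldType) (V : finType) (q : nat) (e : rel V)
  (e_sym : symmetric e) (e_irr : irreflexive e) (hq : (3 <= q)%N)
  (Lambda : {set V}) (sigma : {ffun V -> 'I_q})
  (hfeas : feasible e (0 : R) Lambda sigma)
  (v : V) (hv : v \notin Lambda) (pi : {ffun V -> 'I_q})
  (hloc : locally_feasible e (0 : R) Lambda sigma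
            (B_Omega q e (0 : R) Lambda [set v]) pi) :
  exists rho : {ffun V -> 'I_q},
    0 < w_Omega e (0 : R) Lambda sigma rho /\
    (forall x, x \in B_Omega q e (0 : R) Lambda [set v] -> rho x = pi x).
Proof.
set B := B_Omega q e 0 Lambda [set v] in hloc *.
case: hfeas => rho0; rewrite /w_Omega.
case: forallP => [hs0 | _]; last by rewrite ltxx.
move=> /pos0 /mono0P hp0.
have hs : forall x, x \in Lambda -> rho0 x = sigma x.
  by move=> x xL; apply/eqP; have := hs0 x; rewrite xL.
move: hloc; rewrite /locally_feasible /w_induced => /pos0 /mono0P hglue.
have permL : permissive q e (0:R) Lambda (~: Lambda) && ([set v] \subset ~: Lambda).
  rewrite /permissive subxx /=; apply/andP; split.
    apply/forallP => u; apply/implyP; rewrite !inE => /andP [uL /andP [] ].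
    by rewrite negbK (negbTE uL).
  by rewrite sub1set inE.
have BL : B \subset ~: Lambda.
 by rewrite /B /B_Omega; apply: (bigcap_inf (~: Lambda)).
have hdeg : forall u, u \in boundary e B :\: Lambda -> (deg e u < q)%N.
  move=> u; rewrite !inE => /andP [uL /andP [uB /existsP [w /andP [wB euw]]]].
  have : ~~ [forall B' : {set V}, (permissive q e (0:R) Lambda B' && ([set v] \subset B')) ==> (u \in B')].
    apply/negP => /forallP H; move/negP: uB; apply; apply/bigcapP => B' HB'.
    by have := H B'; rewrite HB'.
  rewrite negb_forall => /existsP [B']; rewrite negb_imply => /andP [HB' uB'].
  have wB' : w \in B' by move: wB => /bigcapP; apply.
  case/andP: HB' => /andP [_ /forallP Hlow] _.
  have := Hlow u; rewrite !inE uL uB' /=.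
  have -> : [exists w0 in B', e u w0] by apply/existsP; exists w; rewrite wB' euw.
  rewrite /low_degree subr0 divr1 /= => hl.
  have : (deg e u)%:R < (q%:R : R) by lra.
  by rewrite ltr_nat.
pose c := [ffun x => if x \in B then pi x else rho0 x].
have cglue : forall x, x \in Lambda :|: B -> c x = glue Lambda sigma pi x.
  move=> x; rewrite !inE /c /glue ffunE; case xL: (x \in Lambda); case xB: (x \in B) => //= _.
  - by move/subsetP: BL => /(_ x xB); rewrite inE xL.
  - by rewrite hs.
have [|c' [h1 h2]] := @greedy V q e e_sym e_irr _ _ c (erefl _) hdeg; last first.
  exists c'; split; last first.
    move=> x xB; rewrite h1 /c ?ffunE ?xB //.
    by rewrite /boundary !inE xB /= andbF.
  rewrite /w_Omega; case: forallP => [_ | H]; last first.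
    exfalso; apply: H => x; apply/implyP => xL; rewrite h1 /c ?ffunE; last by rewrite /boundary !inE xL.
    case: ifP => xB; last by rewrite hs.
    by move/subsetP: BL => /(_ x xB); rewrite inE xL.
  have -> : mono_count e [set: V] c' = 0%N by apply/mono0P => u w _ _; apply: h2.
  by rewrite expr0 ltr01.
move=> u w euw uS wS.
have inb : forall a b, e a b -> a \in B -> b \notin boundary e B :\: Lambda -> b \in Lambda :|: B.
  move=> a b eab aB; rewrite /boundary !inE; case: (b \in Lambda) => //=; case: (b \in B) => //=.
  by move=> /existsPn /(_ a); rewrite aB e_sym eab.
case uB: (u \in B).
  have wLB := inb u w euw uB wS.
  have uLB : u \in Lambda :|: B by rewrite inE uB orbT.
  by rewrite !cglue //; apply: hglue.
case wB: (w \in B).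
  have uLB := inb w u ltac:(by rewrite e_sym) wB uS.
  have wLB : w \in Lambda :|: B by rewrite inE wB orbT.
  by rewrite !cglue //; apply: hglue.
by rewrite /c !ffunE uB wB; apply: hp0; rewrite ?inE.
Qed.
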